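(* Let $X$ be a topologically complete space and $\mathcal A$ a family of closed, locally finite, normal covers of $X$ satisfying conditions (I) and (II), and let $N_\infty=F_\infty$, $\pi:N_\infty\to X$ and $p:X\to N_\infty$ be as in the context. Then: (1) $\pi$ is a perfect map (continuous, closed, with compact fibers $\pi^{-1}(x)$); (2a) $\pi\circ p=\mathrm{id}_X$; (2b) there exists a homotopy $H:N_\infty\times[0,1]\to N_\infty$ with $H_0=\mathrm{id}_{N_\infty}$, $H_1=p\circ\pi$ and $\pi\circ H=\pi\circ\mathrm{proj}$, where $\mathrm{proj}:N_\infty\times[0,1]\to N_\infty$ is the projection. In particular each fiber of $\pi$ is contractible.
   Context: A topologically complete space is a Tychonoff space complete with respect to its finest uniformity. A closed, locally finite, normal cover $\alpha$ of $X$ is a locally finite cover by closed sets admitting a partition of unity $\{\phi_{\alpha,V}:V\in\alpha\}$ with $\mathrm{cl}(\phi_{\alpha,V}^{-1}((0,1]))\subset\mathrm{int}(V)$, $\sum_V\phi_{\alpha,V}=1$; fix such a partition of unity for each $\alpha\in\mathcal A$. $\mathrm{star}_\alpha(x)=\{V\in\alpha:x\in V\}$. Conditions: (I) for each open $U\subset X$ and $x\in U$ there is $\alpha\in\mathcal A$ with $\bigcup\mathrm{star}_\alpha(x)\subset U$; (II) if $f(\alpha)\in\alpha$ is chosen for each $\alpha\in\mathcal A$ and $\{f(\alpha)\}$ has the finite intersection property, then $\bigcap_\alpha f(\alpha)\neq\emptyset$. Construction: $\Lambda$ is the set of finite subsets of $\mathcal A$ directed by inclusion. For $\lambda\in\Lambda$,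 $N^{(0)}_\lambda$ is the set of functions $v$ on $\lambda$ with $v(\alpha)\in\alpha$ for all $\alpha\in\lambda$ and $\wedge v:=\bigcap_{\alpha\in\lambda}v(\alpha)\neq\emptyset$ (empty intersection meaning $X$). $F_\lambda$ is the simplicial complex (weak topology) with vertex set $N^{(0)}_\lambda$ in which $\{v_1,\dots,v_k\}$ spans a simplex iff $\wedge v_i\cap\wedge v_j\neq\emptyset$ for all $i,j$; $N_\lambda$ is its subcomplex with the same vertices in which $\{v_1,\dots,v_k\}$ spans a simplex iff $\bigcap_i\wedge v_i\neq\emptyset$. For $\lambda\subset\mu$, $\pi^\mu_\lambda$ is the simplicial map sending a vertex $v$ to $v|_\lambda$. $F_\infty=\varprojlim F_\lambda$ and $N_\infty=\varprojlim N_\lambda$ (they coincide), with projections $\pi_\lambda$ and $z(\lambda)=\pi_\lambda(z)$. For $a\in F_\lambda$, $\sigma_\lambda(a)$ is the unique simplex containing $a$ in its interior, and $\wedge a=\bigcap\{\wedge v:v\text{ a vertex of }\sigma_\lambda(a)\}$. For each $z\in N_\infty$ the set $\bigcap_\lambda\wedge z(\lambda)$ is a single point, and $\pi(z)$ is defined as that point. For $v\in N^{(0)}_\lambda$ let $\phi_v=\prod_{\alpha\in\lambda}\phi_{\alpha,v(\alpha)}$; $p_\lambda:X\to N_\lambda$ is the canonical map sending $x$ to the point with barycentric coordinates $(\phi_v(x))_{v\in N^{(0)}_\lambda}$. These satisfy $p_\lambda=\pi^\mu_\lambda\circ p_\mu$ for $\lambda\subset\mu$, and $p:X\to N_\infty$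 is the induced map with $\pi_\lambda\circ p=p_\lambda$. *)

(* Defs.v *)
From HB Require Import structures.
From mathcomp Require Import all_boot all_order all_algebra.
From mathcomp Require Import all_classical all_reals all_analysis.
Set Implicit Arguments. Unset Strict Implicit. Unset Printing Implicit Defensive.
Import Order.TTheory GRing.Theory Num.Theory numFieldNormedType.Exports.
Local Open Scope classical_set_scope.
Local Open Scope ring_scope.

(* A "space" is a carrier set S : set T together with a family o of open subsets of S. *)

Definition rcont {T1 T2 : Type} (S1 : set T1) (o1 : set (set T1))
  (S2 : set T2) (o2 : set (set T2)) (f : T1 -> T2) : Prop :=
  (forall x, S1 x -> S2 (f x)) /\ (forall U, o2 U -> o1 (S1 `&` f @^-1` U)).

Definition rclosed {T : Type} (S : set T) (o : set (set T)) (C : set T) : Prop :=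
  C `<=` S /\ o (S `\` C).

Definition rcompact {T : Type} (o : set (set T)) (K : set T) : Prop :=
  forall C : set (set T), C `<=` o -> K `<=` \bigcup_(U in C) U ->
  exists2 D : set (set T), finite_set D /\ D `<=` C & K `<=` \bigcup_(U in D) U.

Definition sub_open {T : Type} (S' : set T) (o : set (set T)) : set (set T) :=
  [set W | exists2 U, o U & W = S' `&` U].

Definition prod_open {T1 T2 : Type} (o1 : set (set T1)) (o2 : set (set T2))
  : set (set (T1 * T2)) :=
  [set W | forall q, W q -> exists U, exists V,
      [/\ o1 U, o2 V, U q.1, V q.2 & U `*` V `<=` W]].

Definition I01 {R : realType} : set R := [set t | 0 <= t <= 1].
Definition I01_open {R : realType} : set (set R) := sub_open I01 [set O : set R | open O].

Section Construction.
Context {X : topologicalType} {R : realType}.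

Definition tychonoff : Prop :=
  accessible_space X /\
  (forall (C : set X) (x : X), closed C -> ~ C x ->
     exists f : X -> R, [/\ continuous f, f x = 0 & forall y, C y -> f y = 1]).

Definition compatible_uniformity (U : set (set (X * X))) : Prop :=
  [/\ U setT,
      (forall E F, U E -> E `<=` F -> U F),
      (forall E F, U E -> U F -> U (E `&` F)) &
      (forall E, U E -> forall x, E (x, x))] /\
  [/\
      (forall E, U E -> U [set q | E (q.2, q.1)]),
      (forall E, U E -> exists2 F, U F & forall x y z, F (x, y) -> F (y, z) -> E (x, z)) &
      (forall (x : X) (B : set X), nbhs x B <-> exists2 E, U E & [set y | E (x, y)] `<=` B)].

(* Cauchy for the finest compatible uniformity (= Cauchy for every compatible one) *)
Definition fine_cauchy (F : set_system X) : Prop :=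
  forall U, compatible_uniformity U -> forall E, U E ->
  exists2 B, F B & forall x y, B x -> B y -> E (x, y).

Definition topologically_complete : Prop :=
  tychonoff /\
  forall F : set_system X, ProperFilter F -> fine_cauchy F -> exists x : X, nbhs x `<=` F.

Definition locally_finite (al : set (set X)) : Prop :=
  forall x : X, exists2 N, nbhs x N & finite_set [set V | al V /\ V `&` N !=set0].

Definition closed_lf_normal_cover (al : set (set X)) (ph : set X -> X -> R) : Prop :=
  [/\ (forall V, al V -> closed V),
      \bigcup_(V in al) V = setT,
      locally_finite al,
      (forall V, al V -> [/\ continuous (ph V), (forall x, 0 <= ph V x <= 1) &
                            closure [set x | 0 < ph V x] `<=` interior V]) &
      (forall x, \sum_(V \in al) ph V x = 1)].

Definition condI (A : set (set (set X))) : Prop :=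
  forall (U : set X) (x : X), open U -> U x ->
  exists2 al, A al & \bigcup_(V in [set V | al V /\ V x]) V `<=` U.

Definition condII (A : set (set (set X))) : Prop :=
  forall f : set (set X) -> set X, (forall al, A al -> al (f al)) ->
  (forall lam : set (set (set X)), finite_set lam -> lam `<=` A -> lam !=set0 ->
      \bigcap_(al in lam) f al !=set0) ->
  \bigcap_(al in A) f al !=set0.

(* vertices: functions v on lambda with v al in al; extended by X outside lambda *)
Definition Vert := set (set X) -> set X.
Definition Pt := Vert -> R.               (* barycentric coordinates *)
Definition Lamb := set (set (set X)).
Definition Zt := Lamb -> Pt.              (* points of the product of the N_lambda *)

Definition Lam (A : set (set (set X))) (lam : Lamb) : Prop := finite_set lam /\ lam `<=` A.

Definition wedge (lam : Lamb) (v : Vert) : set X := \bigcap_(al in lam) v al.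

Definition vertex (lam : Lamb) (v : Vert) : Prop :=
  [/\ (forall al, lam al -> al (v al)), (forall al, ~ lam al -> v al = setT) &
      wedge lam v !=set0].

(* points of (the geometric realisation of) N_lambda *)
Definition Npt (lam : Lamb) (a : Pt) : Prop :=
  [/\ (forall v, 0 <= a v), (forall v, a v != 0 -> vertex lam v),
      (exists x, forall v, a v != 0 -> wedge lam v x) &
      exists n (e : 'I_n -> Vert), [/\ injective e, (forall v, a v != 0 -> exists i, e i = v)
                                     & \sum_(i < n) a (e i) = 1]].

Definition simplex (lam : Lamb) (S : set Vert) : Prop :=
  [/\ finite_set S, (forall v, S v -> vertex lam v) & exists x, forall v, S v -> wedge lam v x].

Definition supp_in (a : Pt) (S : set Vert) : Prop := forall v, a v != 0 -> S v.

(* weak (Whitehead) topology on N_lambda *)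
Definition Nopen (lam : Lamb) : set (set Pt) :=
  [set U | U `<=` Npt lam /\
    forall S, simplex lam S -> forall a, U a -> supp_in a S ->
    exists2 eps : R, 0 < eps & forall b, Npt lam b -> supp_in b S ->
      (forall v, `|a v - b v| < eps) -> U b].

Definition restr (lam : Lamb) (v : Vert) : Vert :=
  fun al => if `[< lam al >] then v al else setT.

(* a = pi^mu_lam b  (simplicial map v |-> v|_lam on barycentric coordinates) *)
Definition bond (lam : Lamb) (b a : Pt) : Prop :=
  forall w, exists n (e : 'I_n -> Vert),
    [/\ injective e, (forall v, (b v != 0 /\ restr lam v = w) <-> exists i, e i = v)
      & a w = \sum_(i < n) b (e i)].

(* N_infty = inverse limit (coordinates outside Lambda fixed to 0) *)
Definition Ninf (A : set (set (set X))) : set Zt :=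
  [set z | [/\ (forall lam, Lam A lam -> Npt lam (z lam)),
              (forall lam, ~ Lam A lam -> z lam = fun=> 0) &
              (forall lam mu, Lam A lam -> Lam A mu -> lam `<=` mu -> bond lam (z mu) (z lam))]].

(* inverse limit topology = subspace topology of the product topology *)
Definition Ninf_open (A : set (set (set X))) : set (set Zt) :=
  [set W | W `<=` Ninf A /\
    forall z, W z -> exists n (ls : 'I_n -> Lamb) (Us : 'I_n -> set Pt),
      (forall i, [/\ Lam A (ls i), Nopen (ls i) (Us i) & Us i (z (ls i))]) /\
      (forall z', Ninf A z' -> (forall i, Us i (z' (ls i))) -> W z')].

Definition wedge_pt (lam : Lamb) (a : Pt) : set X :=
  [set x | forall v, a v != 0 -> wedge lam v x].

(* pi z is the (unique) point of  \bigcap_lam  wedge z(lam) *)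
Definition is_pi (A : set (set (set X))) (pi : Zt -> X) : Prop :=
  forall z, Ninf A z -> forall lam, Lam A lam -> wedge_pt lam (z lam) (pi z).

Definition pNmap (A : set (set (set X))) (phi : set (set X) -> set X -> X -> R) (x : X) : Zt :=
  fun lam v => if `[< Lam A lam /\ vertex lam v >]
               then \big[*%R/1%R]_(al \in lam) phi al (v al) x else 0.

End Construction.

(* Main.v *)
Require Import Defs.
From HB Require Import structures.
From mathcomp Require Import all_boot all_order all_algebra.
From mathcomp Require Import all_classical all_reals all_analysis.
From mathcomp Require Import finmap.
From mathcomp Require Import ring lra.
Import Order.TTheory GRing.Theory Num.Theory numFieldNormedType.Exports.
Local Open Scope classical_set_scope.
Local Open Scope ring_scope.

Set Implicit Arguments. Unset Strict Implicit. Unset Printing Implicit Defensive.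

Lemma pv_finite_set_ind (T : choiceType) (P : set T -> Prop) :
  P set0 -> (forall x S, finite_set S -> ~ S x -> P S -> P (x |` S)) ->
  forall S, finite_set S -> P S.
Proof.
move=> P0 PS S /finite_fsetP[X ->].
elim/fset1U_rect: X => [|x X xX IH]; first by rewrite set_fset0.
rewrite set_fsetU1; apply: PS => //; exact/negP.
Qed.

Lemma pv_finite_funs (I : choiceType) (T : Type) (c : T) (L : set I) :
  finite_set L -> forall B : I -> set T, (forall i, L i -> finite_set (B i)) ->
  finite_set [set f : I -> T | forall i, (L i -> B i (f i)) /\ (~ L i -> f i = c)].
Proof.
move: L; apply: pv_finite_set_ind => [|x S FS Sx IH] B FB.
  apply: (sub_finite_set (B := [set fun=> c])); last exact: finite_set1.
  move=> f /= Hf; apply: funext => i; exact: (Hf i).2.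
have FS' : finite_set [set f : I -> T | forall i, (S i -> B i (f i)) /\ (~ S i -> f i = c)].
  by apply: IH => i Si; apply: FB; right.
pose h (q : (I -> T) * T) := fun i => if i == x then q.2 else q.1 i.
apply: (sub_finite_set (B := h @` ([set f : I -> T | forall i, (S i -> B i (f i)) /\ (~ S i -> f i = c)] `*` B x))).
  move=> f /= Hf; exists ((fun i => if i == x then c else f i), f x).
    split => /=.
      move=> i; split.
        move=> Si; case: eqP => [e|_]; first by subst; exfalso; exact: Sx.
        by apply: (Hf i).1; right.
      move=> nSi; case: eqP => // ne; apply: (Hf i).2 => -[] //.
    by apply: (Hf x).1; left.
  by apply: funext => i; rewrite /h /=; case: eqP => // ->.
apply: finite_image; apply: finite_setX => //; apply: FB; by left.
Qed.

Section Sums.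
Variable R : realType.

Lemma pv_sum_enum (T : choiceType) n (e : 'I_n -> T) (f : T -> R) :
  injective e -> \sum_(i < n) f (e i) = \sum_(v \in range e) f v.
Proof.
move=> ie; rewrite (fsbig_image setT e f); last by move=> a b _ _; apply: ie.
rewrite (fsbigE (index_enum 'I_n)) //.
- by apply: eq_bigl => i; rewrite in_setT.
- exact: index_enum_uniq.
- by move=> i _; rewrite mem_index_enum.
Qed.

Lemma pv_enum_finite (T : choiceType) (x0 : T) (S : set T) : finite_set S ->
  exists n (e : 'I_n -> T), injective e /\ range e = S.
Proof.
move=> FS; pose s := (fset_set S : seq T).
have us : uniq s by exact: fset_uniq.
have mS v : (v \in s) = (v \in S) by exact: (in_fset_set FS v).
exists (size s), (fun i => nth x0 s i); split.
  move=> i j /= H; apply/val_inj/eqP; rewrite -(nth_uniq x0 (ltn_ord i) (ltn_ord j) us); exact/eqP.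
apply/seteqP; split.
  move=> v [i _ <-]; have : nth x0 s i \in s by apply: mem_nth.
  by rewrite mS in_setE.
move=> v Sv; have : v \in s by rewrite mS in_setE.
move=> vs; have iv : (index v s < size s)%N by rewrite index_mem.
exists (Ordinal iv) => //=.
exact: nth_index.
Qed.

Lemma pv_finite_eps (T : choiceType) (S : set T) (P : T -> R -> Prop) : finite_set S ->
  (forall t e e', 0 < e' -> e' <= e -> P t e -> P t e') ->
  (forall t, S t -> exists2 e, 0 < e & P t e) ->
  exists2 e, 0 < e & forall t, S t -> P t e.
Proof.
move=> FS Pm; move: S FS; apply: pv_finite_set_ind => [|x S FS Sx IH] H.
  by exists 1 => //.
have [e1 e1p He1] := IH (fun t St => H t (or_intror St)).
have [e2 e2p He2] := H x (or_introl erefl).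
exists (Num.min e1 e2); first by rewrite lt_min e1p e2p.
have mp : 0 < Num.min e1 e2 by rewrite lt_min e1p e2p.
move=> t [->|St].
  by apply: (Pm _ e2 _ mp); [rewrite ge_min lexx orbT| exact: He2].
by apply: (Pm _ e1 _ mp); [rewrite ge_min lexx| apply: He1].
Qed.

End Sums.

Section B.
Variables (X : topologicalType) (R : realType).

Local Notation Vert := (@Vert X).
Local Notation Pt := (@Pt X R).
Local Notation Lamb := (@Lamb X).
Local Notation Zt := (@Zt X R).

Definition supp (a : Vert -> R) := [set v | a v != 0].
Definition St (al : set (set X)) (x : X) := [set V | al V /\ V x].
Definition Kx (lam : Lamb) (x : X) := [set v : Vert | vertex lam v /\ wedge lam v x].

Lemma wedge1 al (v : Vert) : wedge [set al] v = v al.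
Proof. by rewrite /wedge bigcap_set1. Qed.

Lemma wedgeP lam (v : Vert) x : wedge lam v x <-> forall al, lam al -> v al x.
Proof. by []. Qed.

Lemma Lam1 (A : set (set (set X))) al : A al -> Lam A [set al].
Proof. by move=> Aal; split; [exact: finite_set1 | move=> b ->]. Qed.

Lemma Npt_sum lam (a : Pt) : Npt lam a ->
  finite_set (supp a) /\ \sum_(v \in supp a) a v = 1.
Proof.
case=> a0 av [x hx] [n [e [ie he s1]]].
have sub : supp a `<=` range e by move=> v /he [i ei]; exists i.
split; first by apply: (sub_finite_set sub); apply: finite_image; exact: finite_finset.
rewrite -s1 pv_sum_enum //; apply: fsbig_widen => // v [_ /=]; rewrite /supp /=.
by move/negP; rewrite negbK => /eqP.
Qed.

Lemma Npt_ex lam (a : Pt) : Npt lam a -> exists v, a v != 0.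
Proof.
move=> /Npt_sum [_ s1]; apply: contrapT => H.
move: s1; rewrite fsbig1; first by move/eqP; rewrite eq_sym oner_eq0.
move=> v /= hv; exfalso; apply: H; by exists v.
Qed.

Lemma Npt_le1 lam (a : Pt) v : Npt lam a -> a v <= 1.
Proof.
move=> Na; have [Fs s1] := Npt_sum Na; have [a0 _ _ _] := Na.
have [/eqP ->|nz] := boolP (a v == 0); first exact: ler01.
rewrite -s1 (fsbigD1 v) //= lerDl fsumr_ge0 // => w _; exact: a0.
Qed.

Lemma NptI lam (a : Pt) (S : set Vert) :
  (forall v, 0 <= a v) -> finite_set S -> supp a `<=` S ->
  (forall v, a v != 0 -> vertex lam v) ->
  (exists x, forall v, a v != 0 -> wedge lam v x) ->
  \sum_(v \in S) a v = 1 -> Npt lam a.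
Proof.
move=> a0 FS sS av wx s1; split => //.
have [n [e [ie re]]] := pv_enum_finite (fun=> setT) FS.
exists n, e; split => //.
  by move=> v /sS; rewrite -re => -[i _ <-]; exists i.
by rewrite pv_sum_enum // re.
Qed.

Lemma bondE lam (b a : Pt) : bond lam b a -> forall w,
  finite_set [set v | b v != 0 /\ restr lam v = w] /\
  a w = \sum_(v \in [set v | b v != 0 /\ restr lam v = w]) b v.
Proof.
move=> Hb w; have [n [e [ie he s]]] := Hb w.
have re : range e = [set v | b v != 0 /\ restr lam v = w].
  apply/seteqP; split; first by move=> v [i _ <-]; apply/he; exists i.
  by move=> v /he [i ei]; exists i.
split.
  apply: (sub_finite_set (B := range e)); last by apply: finite_image; exact: finite_finset.
  by move=> v /he [i ei]; exists i.
rewrite s pv_sum_enum //; apply: eq_fsbigl; exact: re.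
Qed.

Lemma bondI lam (b a : Pt) (S : set Vert) : finite_set S -> supp b `<=` S ->
  (forall w, a w = \sum_(v \in S `&` [set v | restr lam v = w]) b v) -> bond lam b a.
Proof.
move=> FS sS Ha w.
have FT : finite_set [set v | b v != 0 /\ restr lam v = w].
  by apply: (sub_finite_set _ FS) => v [/sS].
have [n [e [ie re]]] := pv_enum_finite (fun=> setT) FT.
exists n, e; split => //.
  move=> v; split.
    move=> h; have h' : range e v by rewrite re.
    by case: h' => i _ <-; exists i.
  move=> [i <-]; have h : range e (e i) by exists i.
  by rewrite re in h.
rewrite Ha pv_sum_enum // re; apply/esym/fsbig_widen.
  by move=> v [/sS Sv rv].
move=> v [[Sv rv] /=] H; apply/eqP; apply: contrapT => nz; apply: H; split => //.
exact/negP.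
Qed.

Section Hyps.
Variables (A : set (set (set X))) (phi : set (set X) -> set X -> X -> R).
Hypothesis HT1 : accessible_space X.
Hypothesis Hcov : forall al, A al -> closed_lf_normal_cover al (phi al).
Hypothesis HI : condI A.

Lemma finite_St al x : A al -> finite_set (St al x).
Proof.
move=> /Hcov [_ _ lf _ _]; have [N Nx FN] := lf x.
apply: (sub_finite_set _ FN) => V [alV Vx]; split => //; exists x; split => //.
exact: nbhs_singleton.
Qed.

Lemma finite_Kx lam x : Lam A lam -> finite_set (Kx lam x).
Proof.
move=> [Fl lA].
have := pv_finite_funs setT Fl (B := fun al => St al x) (fun al la => finite_St x (lA _ la)).
apply: sub_finite_set => v [[vl vo _] wx] al; split.
  by move=> la; split; [exact: vl | exact: wx].
exact: vo.
Qed.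

Lemma vertex_in lam (v : Vert) al : vertex lam v -> lam al -> al (v al).
Proof. by case=> h _ _; apply: h. Qed.

Lemma pi_uniq (z : Zt) y y' : Ninf A z ->
  (forall lam, Lam A lam -> wedge_pt lam (z lam) y) ->
  (forall lam, Lam A lam -> wedge_pt lam (z lam) y') -> y = y'.
Proof.
move=> [zN _ _] Hy Hy'; apply: contrapT => neq.
have /HT1 [U [oU Uy nUy']] : y != y' by apply/eqP.
rewrite in_setE in Uy; rewrite in_setE in nUy'.
have [al Aal Hal] := HI oU Uy.
have Lal := Lam1 Aal.
have [v hv] := Npt_ex (zN _ Lal).
have yv := Hy _ Lal v hv; have y'v := Hy' _ Lal v hv.
rewrite wedge1 in yv y'v.
apply: nUy'; apply: Hal; exists (v al) => //; split => //.
case: (zN _ Lal) => _ h _ _; have [vl _ _] := h v hv; exact: vl.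
Qed.

End Hyps.
End B.

Section C.
Variables (X : topologicalType) (R : realType).

Local Notation Vert := (@Vert X).
Local Notation Pt := (@Pt X R).
Local Notation Lamb := (@Lamb X).
Local Notation Zt := (@Zt X R).

Lemma fsprod_ge0 (I : choiceType) (S : set I) (f : I -> R) : finite_set S ->
  (forall i, S i -> 0 <= f i) -> 0 <= \big[*%R/1%R]_(i \in S) f i.
Proof.
move=> FS H; rewrite fsbig_finite // big_seq; apply: prodr_ge0 => i.
by rewrite in_fset_set // in_setE => /H.
Qed.

Lemma fsprod_eq0 (I : choiceType) (S : set I) (f : I -> R) i : finite_set S ->
  S i -> f i = 0 -> \big[*%R/1%R]_(j \in S) f j = 0.
Proof. by move=> FS Si fi; rewrite (fsbigD1 i) //= fi mul0r. Qed.

Lemma restr_id lam (v : Vert) : vertex lam v -> restr lam v = v.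
Proof.
case=> _ vo _; apply: funext => al; rewrite /restr; case: asboolP => // nl.
by rewrite vo.
Qed.

Lemma restr_restr lam mu (v : Vert) : lam `<=` mu -> restr lam (restr mu v) = restr lam v.
Proof.
move=> lm; apply: funext => al; rewrite /restr; case: asboolP => // la.
by rewrite asboolT //; apply: lm.
Qed.

Lemma restr_Kx lam mu x (v : Vert) : lam `<=` mu -> Kx mu x v -> Kx lam x (restr lam v).
Proof.
move=> lm [[vl vo _] wx]; have wl : wedge lam (restr lam v) x.
  by move=> al /= la; rewrite /restr /= asboolT //; apply: wx; apply: lm.
split => //; split.
- by move=> al la; rewrite /restr /= asboolT //; apply: vl; apply: lm.
- by move=> al nl; rewrite /restr /= asboolF.
- by exists x.
Qed.

Definition upd (u : Vert) (be : set (set X)) (V : set X) : Vert :=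
  fun al => if al == be then V else u al.

Variables (A : set (set (set X))) (phi : set (set X) -> set X -> X -> R).
Hypothesis Hcov : forall al, A al -> closed_lf_normal_cover al (phi al).

Definition Pp (x : X) (mu : Lamb) (v : Vert) : R := \big[*%R/1%R]_(al \in mu) phi al (v al) x.

Lemma pNmapE x lam v : pNmap A phi x lam v =
  if `[< Lam A lam /\ vertex lam v >] then Pp x lam v else 0.
Proof. by []. Qed.

Lemma phi_ge0 al V x : A al -> al V -> 0 <= phi al V x.
Proof.
move=> Aal alV; have [_ _ _ Hph _] := Hcov Aal; have [_ b _] := Hph _ alV.
by have /andP[] := b x.
Qed.

Lemma phi_pos al V x : A al -> al V -> phi al V x != 0 -> V x.
Proof.
move=> Aal alV nz; have [_ _ _ Hph _] := Hcov Aal; have [_ b cl] := Hph _ alV.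
have p : 0 < phi al V x by rewrite lt_neqAle eq_sym nz; have /andP[] := b x.
apply: interior_subset; apply: cl; apply: subset_closure; exact: p.
Qed.

Lemma St_sum al x : A al -> \sum_(V \in St al x) phi al V x = 1.
Proof.
move=> Aal; have [_ _ _ _ Hs] := Hcov Aal; rewrite -(Hs x).
apply: fsbig_widen; first by move=> V [].
move=> V [alV nSt] /=; apply/eqP; apply: contrapT => nz; apply: nSt; split => //.
by apply: (phi_pos Aal alV); apply/negP.
Qed.

Lemma Pp_upd x mu u be V : finite_set mu -> ~ mu be ->
  Pp x (be |` mu) (upd u be V) = phi be V x * Pp x mu u.
Proof.
move=> Fm nmb; rewrite /Pp (fsbigD1 be) /=; last by left.
  rewrite /upd eqxx; congr (_ * _).
  have -> : (be |` mu) `\ be = mu.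
    apply/seteqP; split; first by move=> al [[->|//] /= h]; exfalso; apply: h.
    by move=> al mal; split; [right | move=> e; apply: nmb; rewrite -e].
  apply: eq_fsbigr => al; rewrite in_setE => mal; case: eqP => // e.
  by exfalso; apply: nmb; rewrite -e.
by rewrite finite_setU; split => //; exact: finite_set1.
Qed.

Lemma KSstep lam mu be x w : lam `<=` mu -> Lam A mu -> A be -> ~ mu be ->
  \sum_(v \in Kx (be |` mu) x `&` [set v | restr lam v = w]) Pp x (be |` mu) v =
  \sum_(v \in Kx mu x `&` [set v | restr lam v = w]) Pp x mu v.
Proof.
move=> lm Lmu Abe nmb; have [Fm mA] := Lmu.
set S := Kx mu x `&` [set v | restr lam v = w].
have FS : finite_set S by apply: finite_setIl; exact: (finite_Kx Hcov).
have FSt : finite_set (St be x) by exact: (finite_St Hcov).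
have nlb : ~ lam be by move=> /lm.
have rupd u V : restr lam (upd u be V) = restr lam u.
  apply: funext => al; rewrite /restr /upd; case: asboolP => // la.
  by case: eqP => // e; exfalso; apply: nlb; rewrite -e.
have img : Kx (be |` mu) x `&` [set v | restr lam v = w] =
    (fun q => upd q.1 be q.2) @` (S `*` St be x).
  apply/seteqP; split.
    move=> v [[[vl vo _] wx] rw]; exists (restr mu v, v be).
      split; last first.
        by split; [apply: vl; left | apply: wx; left].
      split; last by rewrite /= restr_restr.
      have wm : wedge mu (restr mu v) x.
        by move=> al /= mal; rewrite /restr /= asboolT //; apply: wx; right.
      split => //; split.
      - by move=> al mal; rewrite /restr /= asboolT //; apply: vl; right.
      - by move=> al nm; rewrite /restr /= asboolF.
      - by exists x.
    apply: funext => al /=; rewrite /upd /restr; case: eqP => [->//|ne].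
    case: asboolP => // nm; rewrite vo //; by case.
  move=> v [[u V] [[[[ul uo _] wu] ru] [beV Vx]]] <- /=; split; last by rewrite /= rupd.
  have wv : wedge (be |` mu) (upd u be V) x.
    move=> al /= [->|mal]; rewrite /upd; first by rewrite eqxx.
    by case: eqP => // _; apply: wu.
  split => //; split.
  - move=> al [->|mal]; rewrite /upd; first by rewrite eqxx.
    by case: eqP => [->//|_]; apply: ul.
  - move=> al nal; rewrite /upd; case: eqP => [e|_]; first by exfalso; apply: nal; left.
    by apply: uo => mal; apply: nal; right.
  - by exists x.
rewrite img fsbig_image; last first.
  move=> [u V] [u' V'] /set_mem [[[[_ uo _] _] _] _] /set_mem [[[[_ uo' _] _] _] _] /= e.
  have eV : V = V' by have := congr1 (fun f => f be) e; rewrite /upd eqxx.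
  congr pair => //; apply: funext => al; case: (eqVneq al be) => [->|ne].
    by have := uo _ nmb; have := uo' _ nmb; rewrite /= => -> ->.
  by have := congr1 (fun f => f al) e; rewrite /upd (negbTE ne).
rewrite -(@pair_fsbig _ _ _ _ _ _ _ (fun u V => Pp x (be |` mu) (upd u be V))) //.
apply: eq_fsbigr => u _.
under eq_fsbigr do rewrite Pp_upd //.
by rewrite -mulr_fsuml St_sum // mul1r.
Qed.

Lemma KS lam x : Lam A lam -> forall D, finite_set D -> D `<=` A -> forall w, Kx lam x w ->
  \sum_(v \in Kx (lam `|` D) x `&` [set v | restr lam v = w]) Pp x (lam `|` D) v = Pp x lam w.
Proof.
move=> Ll D FD; move: D FD; apply: pv_finite_set_ind => [|be D FD nDbe IH] DA w Kw.
  rewrite setU0.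
  have -> : Kx lam x `&` [set v | restr lam v = w] = [set w].
    apply/seteqP; split.
      by move=> v [[vv _] /= <-]; rewrite restr_id.
    move=> v -> ; split => //=; by rewrite restr_id //; case: Kw.
  by rewrite fsbig_set1.
have IH' := IH (fun a h => DA a (or_intror h)) w Kw.
have [Fl lA] := Ll.
case: (pselect ((lam `|` D) be)) => [inb|ninb].
  have -> : lam `|` (be |` D) = lam `|` D.
    rewrite setUCA; apply/seteqP; split => al; last by right.
    by case=> [->|//].
  exact: IH'.
rewrite setUCA KSstep //.
all: try by move=> al la; left.
all: try by apply: DA; left.
split; first by rewrite finite_setU.
by move=> al [/lA|h] //; apply: DA; right.
Qed.

Lemma Pp_nz_wedge lam x v : Lam A lam -> vertex lam v -> Pp x lam v != 0 -> wedge lam v x.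
Proof.
move=> [Fl lA] vv nz al la; apply: (phi_pos (lA _ la) (vertex_in vv la)).
apply/negP => /eqP h; move/eqP: nz; apply; exact: (fsprod_eq0 Fl la h).
Qed.

Lemma supp_p lam x : supp (pNmap A phi x lam) `<=` Kx lam x.
Proof.
move=> v; rewrite /supp /= pNmapE; case: asboolP => [[Ll vv] nz|_]; last by rewrite eqxx.
by split => //; exact: Pp_nz_wedge.
Qed.

Lemma p_on_Kx lam x v : Lam A lam -> Kx lam x v -> pNmap A phi x lam v = Pp x lam v.
Proof. by move=> Ll [vv _]; rewrite pNmapE asboolT. Qed.

Lemma Pp_ge0 lam x v : Lam A lam -> vertex lam v -> 0 <= Pp x lam v.
Proof.
move=> [Fl lA] vv; apply: fsprod_ge0 => // al la.
exact: (phi_ge0 _ (lA _ la) (vertex_in vv la)).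
Qed.

Lemma p_ge0 lam x v : 0 <= pNmap A phi x lam v.
Proof. by rewrite pNmapE; case: asboolP => // [[Ll vv]]; apply: Pp_ge0. Qed.

Lemma Lam0 : Lam A set0.
Proof. by split; [exact: finite_set0 | exact: sub0set]. Qed.

Lemma sum_Kx lam x : Lam A lam -> \sum_(v \in Kx lam x) Pp x lam v = 1.
Proof.
move=> Ll; have [Fl lA] := Ll.
pose w0 : Vert := fun=> setT.
have K0 : Kx set0 x w0.
  split; last by move=> al.
  by split => //; exists x => al.
have := KS Lam0 Fl lA K0; rewrite set0U.
have -> : Kx lam x `&` [set v | restr set0 v = w0] = Kx lam x.
  apply/seteqP; split; first by move=> v [].
  move=> v Kv; split => //=; apply: funext => al; by rewrite /restr /= asboolF.
by move=> ->; rewrite /Pp fsbig_set0.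
Qed.

Lemma Npt_p lam x : Lam A lam -> Npt lam (pNmap A phi x lam).
Proof.
move=> Ll; apply: (NptI (S := Kx lam x)).
- by move=> v; exact: p_ge0.
- exact: (finite_Kx Hcov).
- exact: supp_p.
- by move=> v /supp_p [].
- by exists x => v /supp_p [].
- rewrite -(sum_Kx x Ll); apply: eq_fsbigr => v; rewrite in_setE => Kv.
  exact: p_on_Kx.
Qed.

Lemma bond_p lam mu x : Lam A lam -> Lam A mu -> lam `<=` mu ->
  bond lam (pNmap A phi x mu) (pNmap A phi x lam).
Proof.
move=> Ll Lm lm; apply: (bondI (S := Kx mu x)); first exact: (finite_Kx Hcov).
  exact: supp_p.
move=> w; case: (pselect (Kx lam x w)) => [Kw|nKw].
  have [Fm mA] := Lm.
  have := KS Ll (D := mu `\` lam) (finite_setD _ Fm) (fun a h => mA a h.1) Kw.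
  rewrite setDUK // p_on_Kx // => <-; apply: eq_fsbigr => v; rewrite in_setE => -[Kv _].
  by rewrite p_on_Kx.
have -> : pNmap A phi x lam w = 0.
  by apply/eqP; apply: contrapT => nz; apply: nKw; apply: supp_p; apply/negP.
rewrite fsbig1 // => v [Kv rv]; exfalso; apply: nKw; rewrite -rv; exact: restr_Kx Kv.
Qed.

Lemma Ninf_p x : Ninf A (pNmap A phi x).
Proof.
split.
- by move=> lam Ll; exact: Npt_p.
- move=> lam nL; apply: funext => v; rewrite pNmapE asboolF //; by case.
- by move=> lam mu Ll Lm lm; exact: bond_p.
Qed.

End C.

Section D.
Variables (X : topologicalType) (R : realType).

Local Notation Vert := (@Vert X).
Local Notation Pt := (@Pt X R).
Local Notation Lamb := (@Lamb X).
Local Notation Zt := (@Zt X R).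

Variables (A : set (set (set X))) (phi : set (set X) -> set X -> X -> R).
Variable pi : Zt -> X.
Hypothesis HT1 : accessible_space X.
Hypothesis Hcov : forall al, A al -> closed_lf_normal_cover al (phi al).
Hypothesis HI : condI A.
Hypothesis Hpi : is_pi A pi.

Lemma NO_basic n (ls : 'I_n -> Lamb) (Us : 'I_n -> set Pt) :
  (forall i, Lam A (ls i) /\ Nopen (ls i) (Us i)) ->
  Ninf_open A [set z | Ninf A z /\ forall i, Us i (z (ls i))].
Proof.
move=> H; split; first by move=> z [].
move=> z [Nz Uz]; exists n, ls, Us; split => //.
by move=> i; have [? ?] := H i; split.
Qed.

Lemma NO_I (W1 W2 : set Zt) : Ninf_open A W1 -> Ninf_open A W2 ->
  Ninf_open A (W1 `&` W2).
Proof.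
move=> [s1 h1] [s2 h2]; split; first by move=> z [/s1].
move=> z [/h1 [n1 [ls1 [Us1 [H1 K1]]]] /h2 [n2 [ls2 [Us2 [H2 K2]]]]].
exists (n1 + n2)%N.
exists (fun i => match @fintype.split n1 n2 i with inl j => ls1 j | inr k => ls2 k end).
exists (fun i => match @fintype.split n1 n2 i with inl j => Us1 j | inr k => Us2 k end).
split; first by move=> i; case: (@fintype.split n1 n2 i).
move=> z' Nz' H; split.
  apply: K1 => // j; have := H (lshift n2 j).
  by rewrite (_ : lshift n2 j = unsplit (inl j)) // unsplitK.
apply: K2 => // k; have := H (rshift n1 k).
by rewrite (_ : rshift n1 k = unsplit (inr k)) // unsplitK.
Qed.

Lemma NO_Ninf : Ninf_open A (Ninf (R := R) A).
Proof.
split => // z Nz; exists 0%N, (fun=> set0), (fun=> setT); split => //.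
by move=> [].
Qed.

Lemma pi_cont_open (U : set X) : open U -> Ninf_open A (Ninf A `&` pi @^-1` U).
Proof.
move=> oU; split; first by move=> z [].
move=> z [Nz Uz]; have [al Aal Hal] := HI oU Uz.
have Lal := Lam1 Aal.
have [zN _ _] := Nz.
have [v0 nz] := Npt_ex (zN _ Lal).
have [z0 _ _ _] := zN _ Lal.
pose O := [set b : Pt | Npt [set al] b /\ 0 < b v0].
exists 1%N, (fun=> [set al]), (fun=> O); split.
  move=> _; split; first exact: Lam1.
    2: by split; [exact: (zN _ Lal) | rewrite lt_neqAle eq_sym nz z0].
  split; first by move=> b [].
  move=> S _ a [Na av] _; exists (a v0) => // b Nb _ H; split => //.
  by have := H v0; rewrite ltr_distlC subrr => /andP[].
move=> z' Nz' /(_ ord0) [_ pos]; split => //.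
have w' := Hpi Nz' Lal (lt0r_neq0 pos).
have w := Hpi Nz Lal nz.
rewrite wedge1 in w w'; apply: Hal; exists (v0 al) => //; split => //.
have [_ vv _ _] := zN _ Lal; have [vl _ _] := vv v0 nz; exact: vl.
Qed.

Lemma pi_rcont : rcont (Ninf A) (Ninf_open A) setT open pi.
Proof. by split => // U oU; exact: pi_cont_open. Qed.

End D.

Lemma near_finite (T : Type) (F : set_system T) (I : choiceType) (S : set I) (P : I -> set T) :
  Filter F -> finite_set S -> (forall i, S i -> F (P i)) -> F (fun t => forall i, S i -> P i t).
Proof.
move=> FF FS; move: S FS; apply: pv_finite_set_ind => [|a S FS nSa IH] H.
  apply: (@filterS _ _ FF setT); last exact: filterT.
  by move=> t _ i.
have h := @filterI _ _ FF _ _ (H a (or_introl erefl)) (IH (fun i Si => H i (or_intror Si))).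
apply: (@filterS _ _ FF _ _ _ h) => t [Pa Ps] i [->|Si]; [exact: Pa | exact: Ps].
Qed.

Section Gen.
Variable R : realType.

Lemma cont_fsum (T : topologicalType) (I : choiceType) (S : set I) (g : I -> T -> R) :
  finite_set S -> (forall i, continuous (g i)) ->
  continuous (fun t => \sum_(i \in S) g i t).
Proof.
move=> FS; move: S FS; apply: pv_finite_set_ind => [|a S FS nSa IH] H.
  have -> : (fun t => \sum_(i \in set0) g i t) = fun=> 0.
    by apply: funext => t; rewrite fsbig_set0.
  exact: cst_continuous.
have -> : (fun t => \sum_(i \in a |` S) g i t) = (g a + (fun t => \sum_(i \in S) g i t))%R.
  apply: funext => t; rewrite fsbigU0 //.
  all: try by rewrite fsbig_set1.
  all: try exact: finite_set1.
  by move=> i [-> Si].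
move=> t; apply: continuousD; first exact: H.
exact: IH.
Qed.

Lemma cluster_val (T : topologicalType) (Psi : set_system T) (f : T) (g : T -> R) (c : R) :
  cluster Psi f -> continuous g -> Psi [set t | g t = c] -> g f = c.
Proof.
move=> cf cg Hc; apply: contrapT => ne.
have e0 : 0 < `|g f - c| by rewrite normr_gt0 subr_eq0; apply/eqP.
have nb : nbhs f (g @^-1` ball (g f) `|g f - c|) by apply: cg; apply: nbhsx_ballx.
have [t [/= gt bt]] := cf _ _ Hc nb.
by move: bt; rewrite /= -ball_normE /ball_ /= gt ltxx.
Qed.

End Gen.

Section LFsec.
Variables (X : topologicalType) (R : realType).
Local Notation Vert := (@Vert X).
Local Notation Lamb := (@Lamb X).
Variables (A : set (set (set X))) (phi : set (set X) -> set X -> X -> R).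
Hypothesis Hcov : forall al, A al -> closed_lf_normal_cover al (phi al).

Lemma LF_al al x : A al -> \forall y \near x, forall V, al V -> V y -> V x.
Proof.
move=> Aal; have [clo _ lf _ _] := Hcov Aal; have [N Nx FN] := lf x.
have FF : Filter (nbhs x) by exact: _.
pose F' := [set V | al V /\ V `&` N !=set0] `&` [set V | ~ V x].
have H : \forall y \near x, forall V, F' V -> ~ V y.
  apply: (near_finite FF); first exact: finite_setIl.
  move=> V [[alV _] nVx]; apply: open_nbhs_nbhs; split => //.
  by apply: closed_openC; apply: clo.
have h := @filterI _ _ FF _ _ Nx H.
apply: (@filterS _ _ FF _ _ _ h) => y [Ny Hy] V alV Vy; apply: contrapT => nVx.
apply: (Hy V) => //; split => //; split => //; by exists y.
Qed.

Lemma LF lam x : Lam A lam ->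
  \forall y \near x, forall v : Vert, vertex lam v -> wedge lam v y -> wedge lam v x.
Proof.
move=> [Fl lA].
have FF : Filter (nbhs x) by exact: _.
have h : \forall y \near x, forall al, lam al -> forall V, al V -> V y -> V x.
  apply: (near_finite FF Fl).
  by move=> al la; apply: LF_al; apply: lA.
apply: (@filterS _ _ FF _ _ _ h) => y H v vv wy al la.
exact: (H al la (v al) (vertex_in vv la) (wy al la)).
Qed.

End LFsec.

Section KCLsec.
Import ArrowAsProduct.
Variables (X : topologicalType) (R : realType).

Local Notation Vert := (@Vert X).
Local Notation Pt := (@Pt X R).
Local Notation Lamb := (@Lamb X).
Local Notation Zt := (@Zt X R).
Local Notation PT := ((Lamb * Vert)%type -> R).

Variables (A : set (set (set X))) (phi : set (set X) -> set X -> X -> R).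
Variable pi : Zt -> X.
Hypothesis HT1 : accessible_space X.
Hypothesis Hcov : forall al, A al -> closed_lf_normal_cover al (phi al).
Hypothesis HI : condI A.
Hypothesis Hpi : is_pi A pi.

Definition KL x0 (q : (Lamb * Vert)%type) : Prop := Lam A q.1 /\ Kx q.1 x0 q.2.

Definition Tr x0 (z : Zt) : PT := fun q => if `[< KL x0 q >] then z q.1 q.2 else 0.

Definition bnd x0 (q : (Lamb * Vert)%type) : R := if `[< KL x0 q >] then 1 else 0.

Lemma KCL x0 (Phi : set_system Zt) : ProperFilter Phi -> Phi (Ninf A) ->
  (forall U, nbhs x0 U -> Phi (pi @^-1` U)) ->
  exists z, [/\ Ninf A z, pi z = x0 &
    forall W, Ninf_open A W -> W z -> forall B, Phi B -> W `&` B !=set0].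
Proof.
move=> PF PhiN Phipi.
have FPhi : Filter Phi by exact: _.
pose E lam := [set z : Zt | Ninf A z /\ forall v, z lam v != 0 -> Kx lam x0 v].
have PhiE lam : Lam A lam -> Phi (E lam).
  move=> Ll; have h := @filterI _ _ FPhi _ _ PhiN (Phipi _ (LF Hcov x0 Ll)).
  apply: (@filterS _ _ FPhi _ _ _ h) => z [Nz Hz]; split => // v nz.
  have [zN _ _] := Nz; have [_ vv _ _] := zN _ Ll.
  split; first exact: vv.
  apply: Hz; first exact: vv.
  exact: (Hpi Nz Ll nz).
have ETr lam z : Lam A lam -> (forall v, z lam v != 0 -> Kx lam x0 v) ->
    forall v, Tr x0 z (lam, v) = z lam v.
  move=> Ll Hz v; rewrite /Tr /=; case: asboolP => // h.
  apply/esym/eqP; apply: contrapT => nz; apply: h; split => //; apply: Hz; exact/negP.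
pose Psi := Tr x0 @ Phi.
have PPsi : ProperFilter Psi by exact: fmap_proper_filter.
pose Kset := [set f : PT | forall q, `[0, bnd x0 q]%classic (f q)].
have cK : compact Kset.
  have := (@tychonoff _ (fun _ => R) (fun q => `[0, bnd x0 q]%classic) (fun q => @segment_compact R 0 (bnd x0 q))). exact.
have PsiK : Psi Kset.
  apply: (@filterS _ _ FPhi _ _ _ PhiN) => z Nz q /=; rewrite /Tr /bnd.
  case: asboolP => [[Ll Kq]|_]; last by rewrite in_itv /= lexx.
  have [zN _ _] := Nz; rewrite in_itv /=; apply/andP; split.
    by have [z0 _ _ _] := zN _ Ll; apply: z0.
  exact: (Npt_le1 _ (zN _ Ll)).
have [f [Kf cf]] := cK Psi PPsi PsiK.
pose z : Zt := fun lam v => f (lam, v).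
have f0 q : 0 <= f q /\ (~ KL x0 q -> f q = 0).
  have := Kf q; rewrite /= in_itv /= /bnd; case: asboolP => h /andP[a b]; split => //.
  by move=> _; apply/le_anti; rewrite a b.
have CV (g : PT -> R) c : continuous g -> Phi [set y | g (Tr x0 y) = c] -> g f = c.
  by move=> cg H; apply: (cluster_val cf cg).
have cproj q : continuous (fun g : PT => g q) by exact: proj_continuous.
have zsupp lam v : z lam v != 0 -> KL x0 (lam, v).
  move=> nz; apply: contrapT => h; move/eqP: nz; apply; exact: (f0 (lam, v)).2.
have zNpt lam : Lam A lam -> Npt lam (z lam).
  move=> Ll; apply: (NptI (S := Kx lam x0)).
  - move=> v; exact: (f0 (lam,v)).1.
  - exact: (finite_Kx Hcov).
  - by move=> v h; exact: (zsupp lam v h).2.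
  - by move=> v /zsupp [_ []].
  - by exists x0 => v /zsupp [_ []].
  - apply: (CV (fun g => \sum_(v \in Kx lam x0) g (lam, v)) 1).
      apply: cont_fsum; first exact: (finite_Kx Hcov).
      by move=> v; exact: cproj.
    apply: (@filterS _ _ FPhi _ _ _ (PhiE _ Ll)) => y [Ny Hy] /=.
    rewrite (eq_fsbigr (fun v => y lam v)); last by move=> v _; rewrite ETr.
    have [yN _ _] := Ny; have [_ s1] := Npt_sum (yN _ Ll).
    rewrite -s1; apply/esym/fsbig_widen; first by move=> v; apply: Hy.
    move=> v [Kv /= nz]; apply/eqP; apply: contrapT => h; apply: nz; exact/negP.
have zzero lam : ~ Lam A lam -> z lam = fun=> 0.
  move=> nL; apply: funext => v; apply: (f0 (lam, v)).2; by case.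
have zbond lam mu : Lam A lam -> Lam A mu -> lam `<=` mu -> bond lam (z mu) (z lam).
  move=> Ll Lm lm; apply: (bondI (S := Kx mu x0)); first exact: (finite_Kx Hcov).
    by move=> v h; exact: (zsupp mu v h).2.
  move=> w; apply/eqP; rewrite -subr_eq0; apply/eqP.
  apply: (CV (fun g => g (lam, w) -
      \sum_(v \in Kx mu x0 `&` [set v | restr lam v = w]) g (mu, v)) 0).
    move=> t; apply: continuousB; first exact: cproj.
    apply: cont_fsum; first by apply: finite_setIl; exact: (finite_Kx Hcov).
    by move=> v; exact: cproj.
  have h := @filterI _ _ FPhi _ _ (PhiE _ Ll) (PhiE _ Lm).
  apply: (@filterS _ _ FPhi _ _ _ h) => y [[Ny Hl] [_ Hm]] /=.
  rewrite ETr // (eq_fsbigr (fun v => y mu v)); last by move=> v _; rewrite ETr.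
  have [_ _ yb] := Ny; have [_ ->] := bondE (yb _ _ Ll Lm lm) w.
  apply/eqP; rewrite subr_eq0; apply/eqP; apply: fsbig_widen.
    by move=> v [nz rv]; split => //; apply: Hm.
  move=> v [[Kv rv] /= nh]; apply/eqP; apply: contrapT => hh; apply: nh; split => //.
  exact/negP.
have Nz : Ninf A z by split.
have piz : pi z = x0.
  apply: (pi_uniq HT1 HI Nz (Hpi Nz)) => lam Ll v nz.
  by have [_ [_ w]] := zsupp _ _ nz.
exists z; split => //.
move=> W [Wsub HW] Wz B PhiB.
have [n [ls [Us [H1 K]]]] := HW z Wz.
have eps_ex i : exists e, 0 < e /\ forall b, Npt (ls i) b ->
    (forall v, b v != 0 -> Kx (ls i) x0 v) ->
    (forall v, `|z (ls i) v - b v| < e) -> Us i b.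
  have [Li [Usub Hopen] Uz] := H1 i.
  have sim : simplex (ls i) (Kx (ls i) x0).
    split; first exact: (finite_Kx Hcov).
      by move=> v [].
    by exists x0 => v [].
  have [e e0 He] := Hopen _ sim (z (ls i)) Uz (fun v nz => (zsupp _ _ nz).2).
  by exists e; split => // b Nb sb hb; apply: He.
have [eps epsP] := choice eps_ex.
pose C := [set g : PT | forall i, forall v, Kx (ls i) x0 v -> `|f (ls i, v) - g (ls i, v)| < eps i].
have FN : Filter (nbhs f) by exact: _.
have nC : nbhs f C.
  apply: (filter_forall FN) => i.
  apply: (@near_finite _ _ _ (Kx (ls i) x0) (fun v (g : PT) => `|f (ls i, v) - g (ls i, v)| < eps i) FN); first by case: (H1 i) => Li _ _; exact: (finite_Kx Hcov).
  move=> v _; have := cproj (ls i, v) f (ball (f (ls i, v)) (eps i)) (nbhsx_ballx _ _ (epsP i).1).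
  by apply: (@filterS _ _ FN) => g /=; rewrite -ball_normE /ball_ /=.
pose B' := (B `&` Ninf A) `&` (fun y => forall i, E (ls i) y).
have PhiB' : Phi B'.
  apply: (@filterI _ _ FPhi _ _ (@filterI _ _ FPhi _ _ PhiB PhiN)); apply: (filter_forall FPhi) => i.
  by case: (H1 i) => Li _ _; exact: PhiE.
have PsiB' : Psi (Tr x0 @` B').
  by apply: (@filterS _ _ FPhi _ _ _ PhiB') => y By; exists y.
have [g [[y [[By Ny0] EyB] <-] Cg]] := cf _ _ PsiB' nC.
exists y; split => //.
apply: K => //.
move=> i; have [Ny Hy] := EyB i.
have [Ll _ _] := H1 i.
apply: (epsP i).2 => //.
  by have [yN _ _] := Ny; apply: yN.
move=> v; case: (pselect (Kx (ls i) x0 v)) => [Kv|nKv].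
  by have := Cg i v Kv; rewrite ETr.
have -> : z (ls i) v = 0.
  apply/eqP; apply: contrapT => nz; apply: nKv; apply: (zsupp _ _ _).2; exact/negP.
have -> : y (ls i) v = 0.
  apply/eqP; apply: contrapT => nz; apply: nKv; apply: Hy; exact/negP.
by rewrite subrr normr0; exact: (epsP i).1.
Qed.

End KCLsec.

Section Gsec.
Variables (X : topologicalType) (R : realType).
Local Notation Vert := (@Vert X).
Local Notation Pt := (@Pt X R).
Local Notation Lamb := (@Lamb X).
Local Notation Zt := (@Zt X R).

Variables (A : set (set (set X))) (phi : set (set X) -> set X -> X -> R).
Variable pi : Zt -> X.
Hypothesis HT1 : accessible_space X.
Hypothesis Hcov : forall al, A al -> closed_lf_normal_cover al (phi al).
Hypothesis HI : condI A.
Hypothesis Hpi : is_pi A pi.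

Lemma pi_compact x : rcompact (Ninf_open A) (Ninf A `&` pi @^-1` [set x]).
Proof.
move=> C Csub cov; apply: contrapT => nfin.
pose Fx := Ninf A `&` pi @^-1` [set x].
pose Ds := [set D : set (set Zt) | finite_set D /\ D `<=` C].
pose Bf (D : set (set Zt)) := Fx `\` \bigcup_(U in D) U.
pose Phi := filter_from Ds Bf.
have FPhi : Filter Phi.
  apply: filter_from_filter; first by exists set0; split; [exact: finite_set0 | exact: sub0set].
  move=> D1 D2 [F1 S1] [F2 S2]; exists (D1 `|` D2).
    split; first by rewrite finite_setU.
    by move=> U [/S1|/S2].
  move=> z [Fz nU]; split; split => //; move=> [U DU Uz]; apply: nU; exists U => //.
    by left.
  by right.
have PPhi : ProperFilter Phi.
  apply: filter_from_proper => D [FD SD]; apply: contrapT => ne.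
  apply: nfin; exists D; first by split.
  move=> z Fz; apply: contrapT => nz; apply: ne; exists z; split => //.
have PN : Phi (Ninf A).
  by exists set0; [split; [exact: finite_set0 | exact: sub0set] | move=> z [[]]].
have Ppi : forall U, nbhs x U -> Phi (pi @^-1` U).
  move=> U xU; exists set0; first by split; [exact: finite_set0 | exact: sub0set].
  move=> z [[_ /= ->] _]; exact: nbhs_singleton.
have [z [Nz piz Hz]] := KCL HT1 Hcov HI Hpi PPhi PN Ppi.
have [W CW Wz] := cov z (conj Nz piz).
have PW : Phi (Bf [set W]).
  exists [set W] => //; split; [exact: finite_set1 | by move=> U ->].
have [y [Wy [_ nW]]] := Hz W (Csub _ CW) Wz _ PW.
by apply: nW; exists W.
Qed.

Lemma pi_closed C : rclosed (Ninf A) (Ninf_open A) C -> closed (pi @` C).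
Proof.
move=> [CN oC] x clx.
pose Phi := filter_from (nbhs x) (fun U => C `&` pi @^-1` U).
have Fn : Filter (nbhs x) by exact: _.
have FPhi : Filter Phi.
  apply: filter_from_filter; first by exists setT; exact: filterT.
  move=> U V xU xV; exists (U `&` V); first exact: filterI.
  by move=> z [Cz [Uz Vz]]; split; split.
have PPhi : ProperFilter Phi.
  apply: filter_from_proper => U xU; have [y [[z Cz <-] Uy]] := clx U xU.
  by exists z.
have PN : Phi (Ninf A).
  by exists setT; [exact: filterT | move=> z [/CN]].
have Ppi : forall U, nbhs x U -> Phi (pi @^-1` U).
  by move=> U xU; exists U => // z [].
have [z [Nz piz Hz]] := KCL HT1 Hcov HI Hpi PPhi PN Ppi.
case: (pselect (C z)) => [Cz|nCz]; first by exists z.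
have PC : Phi C by exists setT; [exact: filterT | move=> y []].
have [y [[_ nCy] Cy]] := Hz _ oC (conj Nz nCz) _ PC.
by exfalso; apply: nCy.
Qed.

End Gsec.

Section Hsec.
Variables (X : topologicalType) (R : realType).
Local Notation Vert := (@Vert X).
Local Notation Pt := (@Pt X R).
Local Notation Lamb := (@Lamb X).
Local Notation Zt := (@Zt X R).

Lemma sum_over lam (a : Pt) (S : set Vert) : Npt lam a -> supp a `<=` S ->
  \sum_(v \in S) a v = 1.
Proof.
move=> Na sS; have [_ s1] := Npt_sum Na; rewrite -s1; apply/esym/fsbig_widen => //.
move=> v [Sv /= nz]; apply/eqP; apply: contrapT => h; apply: nz; exact/negP.
Qed.

Lemma bond_over lam (b a : Pt) (S : set Vert) : bond lam b a -> supp b `<=` S ->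
  forall w, a w = \sum_(v \in S `&` [set v | restr lam v = w]) b v.
Proof.
move=> Hb sS w; have [_ ->] := bondE Hb w; apply: fsbig_widen.
  by move=> v [nz rv]; split => //; apply: sS.
move=> v [[Sv rv] /= nh]; apply/eqP; apply: contrapT => hh; apply: nh; split => //.
exact/negP.
Qed.

Variables (A : set (set (set X))) (phi : set (set X) -> set X -> X -> R).
Variable pi : Zt -> X.
Hypothesis HT1 : accessible_space X.
Hypothesis Hcov : forall al, A al -> closed_lf_normal_cover al (phi al).
Hypothesis HI : condI A.
Hypothesis Hpi : is_pi A pi.

Definition Hmap (q : Zt * R) : Zt :=
  fun lam v => (1 - q.2) * q.1 lam v + q.2 * pNmap A phi (pi q.1) lam v.

Lemma Hmap0 z : Hmap (z, 0) = z.
Proof. by apply: funext => lam; apply: funext => v; rewrite /Hmap /= subr0 mul1r mul0r addr0. Qed.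

Lemma Hmap1 z : Hmap (z, 1) = pNmap A phi (pi z).
Proof. by apply: funext => lam; apply: funext => v; rewrite /Hmap /= subrr mul0r add0r mul1r. Qed.

Lemma supp_z z lam : Ninf A z -> Lam A lam -> supp (z lam) `<=` Kx lam (pi z).
Proof.
move=> Nz Ll v nz; have [zN _ _] := Nz; have [_ vv _ _] := zN _ Ll.
split; first exact: vv.
exact: (Hpi Nz Ll nz).
Qed.

Lemma supp_H z t lam : Ninf A z -> Lam A lam -> supp (Hmap (z, t) lam) `<=` Kx lam (pi z).
Proof.
move=> Nz Ll v; rewrite /supp /Hmap /= => nz.
case: (pselect (z lam v != 0)) => [h|h]; first exact: supp_z.
have z0 : z lam v = 0 by apply/eqP; apply: contrapT => hh; apply: h; exact/negP.
apply: (supp_p Hcov) => /=.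
move: nz; rewrite z0 mulr0 add0r => nz.
by apply: contra_neq nz => ->; rewrite mulr0.
Qed.

Lemma Ninf_H z t : Ninf A z -> I01 t -> Ninf A (Hmap (z, t)).
Proof.
move=> Nz /andP[t0 t1]; have [zN zz zb] := Nz.
have Np := Ninf_p Hcov (pi z); have [pN pz pb] := Np.
have t1' : 0 <= 1 - t by rewrite subr_ge0.
split.
- move=> lam Ll; apply: (NptI (S := Kx lam (pi z))).
  + move=> v; rewrite /Hmap /=; apply: addr_ge0; apply: mulr_ge0 => //.
      by have [h _ _ _] := zN _ Ll; apply: h.
    exact: p_ge0.
  + exact: (finite_Kx Hcov).
  + exact: supp_H.
  + by move=> v nz; have [] := supp_H (t := t) Nz Ll nz.
  + by exists (pi z) => v nz; have [] := supp_H (t := t) Nz Ll nz.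
  + rewrite /Hmap /= fsbig_split; last exact: (finite_Kx Hcov).
    rewrite -!mulr_fsumr (sum_over (zN _ Ll) (supp_z Nz Ll)).
    rewrite (sum_over (pN _ Ll) (@supp_p _ _ _ _ Hcov _ (pi z))).
    by rewrite !mulr1; exact: (subrK t 1).
- move=> lam nL; apply: funext => v; rewrite /Hmap /= zz // pz //.
  by rewrite mulr0 mulr0 addr0.
- move=> lam mu Ll Lm lm; apply: (bondI (S := Kx mu (pi z))).
  + exact: (finite_Kx Hcov).
  + exact: supp_H.
  + move=> w; rewrite /Hmap /= fsbig_split; last by apply: finite_setIl; exact: (finite_Kx Hcov).
    rewrite -!mulr_fsumr.
    rewrite -(bond_over (zb _ _ Ll Lm lm) (supp_z Nz Lm)).
    by rewrite -(bond_over (pb _ _ Ll Lm lm) (@supp_p _ _ _ _ Hcov _ (pi z))).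
Qed.

Lemma pi_H z t : Ninf A z -> I01 t -> pi (Hmap (z, t)) = pi z.
Proof.
move=> Nz It; have NH := Ninf_H Nz It.
apply: (pi_uniq HT1 HI NH (Hpi NH)) => lam Ll v nz.
by have [_ w] := supp_H (t := t) Nz Ll nz.
Qed.

End Hsec.

Section Isec0.
Variable R : realType.

Lemma cont_fprod (T : topologicalType) (I : choiceType) (S : set I) (g : I -> T -> R) :
  finite_set S -> (forall i, S i -> continuous (g i)) ->
  continuous (fun t => \big[*%R/1%R]_(i \in S) g i t).
Proof.
move=> FS; move: S FS; apply: pv_finite_set_ind => [|a S FS nSa IH] H.
  have -> : (fun t => \big[*%R/1%R]_(i \in set0) g i t) = fun=> 1.
    by apply: funext => t; rewrite fsbig_set0.
  exact: cst_continuous.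
have -> : (fun t => \big[*%R/1%R]_(i \in a |` S) g i t) =
    (g a \* (fun t => \big[*%R/1%R]_(i \in S) g i t))%R.
  apply: funext => t; rewrite fsbigU0 //.
  all: try by rewrite fsbig_set1.
  all: try exact: finite_set1.
  by move=> i [-> Si].
move=> t; apply: continuousM; first by apply: H; left.
by apply: IH => i Si; apply: H; right.
Qed.

Lemma est (t0 t z0 z p0 p e : R) : 0 <= t0 <= 1 -> 0 <= z <= 1 -> 0 <= p <= 1 ->
  `|z0 - z| < e / 3 -> `|p0 - p| < e / 3 -> `|t0 - t| < e / 6 ->
  `|((1 - t0) * z0 + t0 * p0) - ((1 - t) * z + t * p)| < e.
Proof.
move=> /andP[t00 t01] /andP[z0' z1] /andP[p0' p1] hz hp ht.
have -> : ((1 - t0) * z0 + t0 * p0) - ((1 - t) * z + t * p) =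
  (1 - t0) * (z0 - z) + (t - t0) * z + t0 * (p0 - p) + (t0 - t) * p by ring.
have h1 : `|(1 - t0) * (z0 - z)| <= `|z0 - z|.
  rewrite normrM ger0_norm ?subr_ge0 //; apply: ler_piMl => //; lra.
have h2 : `|(t - t0) * z| <= `|t0 - t|.
  rewrite normrM (ger0_norm z0') distrC; apply: ler_piMr => //.
have h3 : `|t0 * (p0 - p)| <= `|p0 - p|.
  by rewrite normrM (ger0_norm t00); apply: ler_piMl.
have h4 : `|(t0 - t) * p| <= `|t0 - t|.
  by rewrite normrM (ger0_norm p0'); apply: ler_piMr.
set a1 := (1 - t0) * (z0 - z); set a2 := (t - t0) * z; set a3 := t0 * (p0 - p).
set a4 := (t0 - t) * p.
have tr : `|a1 + a2 + a3 + a4| <= `|a1| + `|a2| + `|a3| + `|a4|.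
  apply: (le_trans (ler_normD _ _)); rewrite lerD2r.
  apply: (le_trans (ler_normD _ _)); rewrite lerD2r.
  exact: ler_normD.
lra.
Qed.

End Isec0.

Section Isec.
Variables (X : topologicalType) (R : realType).
Local Notation Vert := (@Vert X).
Local Notation Pt := (@Pt X R).
Local Notation Lamb := (@Lamb X).
Local Notation Zt := (@Zt X R).

Lemma Nopen_near lam (a0 : Pt) (S : set Vert) e : finite_set S ->
  Nopen lam [set b | Npt lam b /\ forall v, S v -> `|a0 v - b v| < e].
Proof.
move=> FS; split; first by move=> b [].
move=> S' _ b [Nb Hb] _.
have mono : forall v d d', 0 < d' -> d' <= d ->
    (forall b' : Pt, `|b v - b' v| < d -> `|a0 v - b' v| < e) ->
    (forall b' : Pt, `|b v - b' v| < d' -> `|a0 v - b' v| < e).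
  by move=> v d d' _ le h b' hb; apply: h; exact: lt_le_trans hb le.
have ex : forall v, S v -> exists2 d, 0 < d &
    (forall b' : Pt, `|b v - b' v| < d -> `|a0 v - b' v| < e).
  move=> v Sv; exists (e - `|a0 v - b v|); first by rewrite subr_gt0; exact: Hb.
  move=> b' hb; apply: (le_lt_trans (ler_distD (b v) _ _)).
  by rewrite -ltrBrDl.
have [d d0 Hd] := pv_finite_eps FS mono ex.
exists d => // b' Nb' _ hb'; split => // v Sv; exact: Hd.
Qed.

Variables (A : set (set (set X))) (phi : set (set X) -> set X -> X -> R).
Variable pi : Zt -> X.
Hypothesis HT1 : accessible_space X.
Hypothesis Hcov : forall al, A al -> closed_lf_normal_cover al (phi al).
Hypothesis HI : condI A.
Hypothesis Hpi : is_pi A pi.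

Lemma p_cont lam v : continuous (fun y => pNmap A phi y lam v).
Proof.
case: (pselect (Lam A lam /\ vertex lam v)) => [[Ll vv]|h].
  have -> : (fun y => pNmap A phi y lam v) = fun y => Pp phi y lam v.
    by apply: funext => y; rewrite pNmapE asboolT.
  have [Fl lA] := Ll.
  apply: cont_fprod => // al la.
  have [_ _ _ Hph _] := Hcov (lA _ la); have [c _ _] := Hph _ (vertex_in vv la).
  exact: c.
have -> : (fun y => pNmap A phi y lam v) = fun=> 0.
  by apply: funext => y; rewrite pNmapE asboolF.
exact: cst_continuous.
Qed.

Lemma H_rcont : rcont (Ninf A `*` I01) (prod_open (Ninf_open A) I01_open) (Ninf A) (Ninf_open A)
  (Hmap A phi pi).
Proof.
split; first by move=> [z t] [/= Nz It]; exact: Ninf_H.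
move=> W [Wsub HW] [z0 t0] [[/= Nz0 It0] /= Wq].
have [n [ls [Us [H1 K]]]] := HW _ Wq.
pose x0 := pi z0.
have Lls i : Lam A (ls i) by case: (H1 i).
have aS i : supp (Hmap A phi pi (z0, t0) (ls i)) `<=` Kx (ls i) x0.
  exact: (supp_H Hcov Hpi Nz0 (Lls i)).
have eps_ex i : exists e, 0 < e /\ forall b, Npt (ls i) b ->
    (forall v, b v != 0 -> Kx (ls i) x0 v) ->
    (forall v, `|Hmap A phi pi (z0, t0) (ls i) v - b v| < e) -> Us i b.
  have [Li [Usub Hopen] Uz] := H1 i.
  have sim : simplex (ls i) (Kx (ls i) x0).
    split; first exact: (finite_Kx Hcov).
      by move=> v [].
    by exists x0 => v [].
  have [e e0 He] := Hopen _ sim _ Uz (aS i).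
  by exists e; split => // b Nb sb hb; apply: He.
have [eps epsP] := choice eps_ex.
have eps0 i : 0 < eps i by case: (epsP i).
pose U0 := [set y | forall i, (forall v, vertex (ls i) v -> wedge (ls i) v y -> wedge (ls i) v x0) /\
  (forall v, Kx (ls i) x0 v -> `|pNmap A phi x0 (ls i) v - pNmap A phi y (ls i) v| < eps i / 3)].
have FN : Filter (nbhs x0) by exact: _.
have nU : nbhs x0 U0.
  apply: (filter_forall FN) => i; apply: (@filterI _ _ FN); first exact: (LF Hcov).
  apply: (@near_finite _ _ _ (Kx (ls i) x0)
    (fun v y => `|pNmap A phi x0 (ls i) v - pNmap A phi y (ls i) v| < eps i / 3) FN).
    exact: (finite_Kx Hcov).
  move=> v _; have e3 : 0 < eps i / 3 by rewrite divr_gt0.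
  have := @p_cont (ls i) v x0 _ (nbhsx_ballx _ _ e3).
  by apply: (@filterS _ _ FN) => y /=; rewrite -ball_normE /ball_ /=.
have Pd : forall i, [set: 'I_n] i -> exists2 d : R, 0 < d & d <= eps i / 6.
  by move=> i _; exists (eps i / 6) => //; rewrite divr_gt0.
have [d d0 Hd] := pv_finite_eps (P := fun i d => d <= eps i / 6) finite_finset
  (fun i e e' _ le h => le_trans le h) Pd.
pose O i := [set b : Pt | Npt (ls i) b /\ forall v, Kx (ls i) x0 v -> `|z0 (ls i) v - b v| < eps i / 3].
exists ((Ninf A `&` pi @^-1` (interior U0)) `&` [set z | Ninf A z /\ forall i, O i (z (ls i))]).
exists (I01 `&` ball t0 d).
have [zN _ _] := Nz0.
split.
- apply: NO_I; first by apply: (pi_cont_open HI Hpi); exact: open_interior.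
  apply: NO_basic => i; split => //; apply: Nopen_near; exact: (finite_Kx Hcov).
- by exists (ball t0 d) => //; exact: ball_open.
- split; first by split => //; exact: nU.
  split => // i; split; first exact: zN.
  by move=> v _; rewrite subrr normr0 divr_gt0.
- by split => //; exact: ballxx.
move=> [z t] [[[Nz piU] [_ HO]] [It bt]] /=.
split; first by split.
have NH := Ninf_H Hcov Hpi Nz It.
apply: K => // i; apply: (epsP i).2.
- by have [h _ _] := NH; apply: h.
- move=> v nz; have [vv w] := supp_H Hcov Hpi Nz (Lls i) nz.
  split => //; apply: ((interior_subset piU i).1 _ vv w).
- move=> v; case: (pselect (Kx (ls i) x0 v)) => [Kv|nKv].
    rewrite /Hmap /=.
    have [Nzi _ _ _] := zN _ (Lls i).
    have [Nzz _ _] := Nz.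
    apply: est.
    + by move: It0.
    + apply/andP; split; first by have [h _ _ _] := Nzz _ (Lls i); apply: h.
      exact: Npt_le1 (Nzz _ (Lls i)).
    + apply/andP; split; first exact: p_ge0.
      exact: Npt_le1 (Npt_p Hcov _ (Lls i)).
    + by have [_ h] := HO i; apply: h.
    + by have := (interior_subset piU i).2 v Kv.
    + move: bt; rewrite /= -ball_normE /ball_ /= => bt.
      exact: lt_le_trans bt (Hd i I).
  have -> : Hmap A phi pi (z0, t0) (ls i) v = 0.
    by apply/eqP; apply: contrapT => nz; apply: nKv; apply: aS; exact/negP.
  have -> : Hmap A phi pi (z, t) (ls i) v = 0.
    apply/eqP; apply: contrapT => nz; apply: nKv.
    have [vv w] := supp_H Hcov Hpi Nz (Lls i) (introT negP nz).
    split => //; apply: ((interior_subset piU i).1 _ vv w).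
  by rewrite subrr normr0.
Qed.

End Isec.

Unset Implicit Arguments. Set Strict Implicit.

Theorem theorem2p5 (X : topologicalType) (R : realType)
  (A : set (set (set X))) (phi : set (set X) -> set X -> X -> R)
  (pi : (set (set (set X)) -> (set (set X) -> set X) -> R) -> X) :
  topologically_complete (X := X) (R := R) ->
  (forall al, A al -> closed_lf_normal_cover al (phi al)) ->
  condI A -> condII A ->
  is_pi A pi ->
  let p := pNmap A phi in
  (* (1) pi is perfect *)
  [/\ rcont (Ninf A) (Ninf_open A) setT open pi,
      (forall C, rclosed (Ninf A) (Ninf_open A) C -> closed (pi @` C)) &
      (forall x, rcompact (Ninf_open A) (Ninf A `&` pi @^-1` [set x]))] /\
  (* (2a) *)
  (forall x, pi (p x) = x) /\
  (* (2b) *)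
  (exists H : (set (set (set X)) -> (set (set X) -> set X) -> R) * R ->
              (set (set (set X)) -> (set (set X) -> set X) -> R),
     [/\ rcont (Ninf A `*` I01) (prod_open (Ninf_open A) I01_open) (Ninf A) (Ninf_open A) H,
         (forall z, Ninf A z -> H (z, 0) = z),
         (forall z, Ninf A z -> H (z, 1) = p (pi z)) &
         (forall z t, Ninf A z -> I01 t -> pi (H (z, t)) = pi z)]) /\
  (* in particular every fibre of pi is contractible *)
  (forall x, let F := Ninf A `&` pi @^-1` [set x] in
     exists G : (set (set (set X)) -> (set (set X) -> set X) -> R) * R ->
                (set (set (set X)) -> (set (set X) -> set X) -> R),
     exists c, [/\ F c,
       rcont (F `*` I01) (prod_open (sub_open F (Ninf_open A)) I01_open) F (sub_open F (Ninf_open A)) G,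
       (forall z, F z -> G (z, 0) = z) &
       (forall z, F z -> G (z, 1) = c)]).
Proof.
move=> [[HT1 _] _] Hcov HI _ Hpi p.
have pip x : pi (pNmap A phi x) = x.
  have Np := Ninf_p Hcov x.
  apply: (pi_uniq HT1 HI Np (Hpi _ Np)) => lam Ll v nz.
  by have [_ w] := supp_p Hcov nz.
split.
  split.
  - exact: (pi_rcont HI Hpi).
  - by move=> C hC; exact: (pi_closed HT1 Hcov HI Hpi hC).
  - by move=> x; exact: (pi_compact HT1 Hcov HI Hpi (x := x)).
split; first exact: pip.
split.
  exists (Hmap A phi pi); split.
  - exact: (H_rcont Hcov HI Hpi).
  - by move=> z _; exact: Hmap0.
  - by move=> z _; exact: Hmap1.
  - by move=> z t Nz It; exact: (pi_H HT1 Hcov HI Hpi Nz It).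
move=> x F.
exists (Hmap A phi pi), (pNmap A phi x); split.
- by split; [exact: Ninf_p | exact: pip].
- split.
    move=> [z t] [[Nz pz] It] /=; split; first exact: (Ninf_H Hcov Hpi Nz It).
    by rewrite /= (pi_H HT1 Hcov HI Hpi Nz It).
  move=> U [W oW ->].
  have [_ HC] := H_rcont Hcov HI Hpi.
  move=> [z t] [[[Nz pz] It] [_ Wq]].
  have [U1 [V1 [oU1 oV1 U1z V1t sub]]] := HC W oW (z, t) (conj (conj Nz It) Wq).
  exists (F `&` U1), V1; split => //.
  + by exists U1.
  + move=> [z' t'] [[Fz' U1z'] V1t'] /=.
    have [[Nz' It'] Wq'] := sub (z', t') (conj U1z' V1t').
    split => //; split => //; split; first exact: (Ninf_H Hcov Hpi Nz' It').
    by have [_ pz'] := Fz'; rewrite /= (pi_H HT1 Hcov HI Hpi Nz' It').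
- by move=> z _; exact: Hmap0.
- by move=> z [Nz pz]; rewrite Hmap1 pz.
Qed.
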